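(* Every monadic ortholattice $(L,\exists)$ embeds (as a monadic ortholattice) into $\mathcal{L}(\mathcal{X})$ for some monadic orthoframe $\mathcal{X}$; and if $L$ is complete, $(L,\exists)$ is isomorphic to $\mathcal{L}(\mathcal{X})$ for some monadic orthoframe $\mathcal{X}$. (Specifically one may take $\mathcal{X}=(L\setminus\{0\},\perp,R)$ with $x\perp y\iff x\le y^\perp$ and $x\,R\,y\iff y\le\exists x$, and the embedding $a\mapsto\{x\in L\setminus\{0\}: x\le a\}$.)
   Context: A monadic ortholattice is an ortholattice (bounded lattice with an order-inverting period-two $\perp$ with $x\wedge x^\perp=0$, $x\vee x^\perp=1$) with a unary $\exists$ satisfying (Q1) $\exists0=0$, (Q2) $p\le\exists p$, (Q3) $\exists(p\vee q)=\exists p\vee\exists q$, (Q4) $\exists\exists p=\exists p$, (Q5) $\exists(\exists p)^\perp=(\exists p)^\perp$. An orthoframe $(X,\perp)$ is a set with an irreflexive symmetric relation; $A^\perp=\{x: a\perp x\ \forall a\in A\}$; $\mathcal{L}(X,\perp)=\{A: A=A^{\perp\perp}\}$ is a complete ortholattice (meets = intersections, orthocomplement $A^\perp$). $R[A]=\{y: x\,R\,y \text{ for some } x\in A\}$. A monadic orthoframe is $(X,\perp,R)$ with (M1) $\perp$ an orthogonality relation, (M2) $R$ reflexive and transitive, (M3) $R[R[\{x\}]^\perp]\subseteq R[\{x\}]^\perp$ for each $x$. $\mathcal{L}(\mathcal{X})=(\mathcal{L}(X,\perp),\exists_R)$ with $\exists_RA=R[A]^{\perp\perp}$. *)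

(* Defs.v *)
Record ortholattice := OL {
  ol_car :> Type;
  ol_le : ol_car -> ol_car -> Prop;
  ol_meet : ol_car -> ol_car -> ol_car;
  ol_join : ol_car -> ol_car -> ol_car;
  ol_bot : ol_car;
  ol_top : ol_car;
  ol_compl : ol_car -> ol_car;
  ol_le_refl : forall a, ol_le a a;
  ol_le_trans : forall a b c, ol_le a b -> ol_le b c -> ol_le a c;
  ol_le_antisym : forall a b, ol_le a b -> ol_le b a -> a = b;
  ol_meet_l : forall a b, ol_le (ol_meet a b) a;
  ol_meet_r : forall a b, ol_le (ol_meet a b) b;
  ol_meet_glb : forall a b c, ol_le c a -> ol_le c b -> ol_le c (ol_meet a b);
  ol_join_l : forall a b, ol_le a (ol_join a b);
  ol_join_r : forall a b, ol_le b (ol_join a b);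
  ol_join_lub : forall a b c, ol_le a c -> ol_le b c -> ol_le (ol_join a b) c;
  ol_bot_le : forall a, ol_le ol_bot a;
  ol_le_top : forall a, ol_le a ol_top;
  ol_compl_anti : forall a b, ol_le a b -> ol_le (ol_compl b) (ol_compl a);
  ol_compl_invol : forall a, ol_compl (ol_compl a) = a;
  ol_meet_compl : forall a, ol_meet a (ol_compl a) = ol_bot;
  ol_join_compl : forall a, ol_join a (ol_compl a) = ol_top
}.

Arguments ol_le {o}.
Arguments ol_meet {o}.
Arguments ol_join {o}.
Arguments ol_bot {o}.
Arguments ol_top {o}.
Arguments ol_compl {o}.

Definition is_quantifier (L : ortholattice) (ex : L -> L) : Prop :=
  ex ol_bot = ol_bot /\
  (forall p, ol_le p (ex p)) /\
  (forall p q, ex (ol_join p q) = ol_join (ex p) (ex q)) /\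
  (forall p, ex (ex p) = ex p) /\
  (forall p, ex (ol_compl (ex p)) = ol_compl (ex p)).

Definition ol_complete (L : ortholattice) : Prop :=
  forall S : L -> Prop, exists s : L,
    (forall a, S a -> ol_le a s) /\
    (forall u, (forall a, S a -> ol_le a u) -> ol_le s u).

Definition perp_set {X : Type} (perp : X -> X -> Prop) (A : X -> Prop) : X -> Prop :=
  fun x => forall a, A a -> perp a x.

Definition image_rel {X : Type} (R : X -> X -> Prop) (A : X -> Prop) : X -> Prop :=
  fun y => exists x, A x /\ R x y.

Definition set_eq {X : Type} (A B : X -> Prop) : Prop := forall x, A x <-> B x.

(* A is a member of L(X, perp): A = A^{perp perp} *)
Definition perp_closed {X : Type} (perp : X -> X -> Prop) (A : X -> Prop) : Prop :=
  set_eq A (perp_set perp (perp_set perp A)).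

Definition orthogonality {X : Type} (perp : X -> X -> Prop) : Prop :=
  (forall x, ~ perp x x) /\ (forall x y, perp x y -> perp y x).

Definition monadic_orthoframe {X : Type} (perp R : X -> X -> Prop) : Prop :=
  orthogonality perp /\
  ((forall x, R x x) /\ (forall x y z, R x y -> R y z -> R x z)) /\
  (forall x y, image_rel R (perp_set perp (image_rel R (fun z => z = x))) y ->
               perp_set perp (image_rel R (fun z => z = x)) y).

Definition LX_meet {X : Type} (A B : X -> Prop) : X -> Prop := fun x => A x /\ B x.
Definition LX_join {X : Type} (perp : X -> X -> Prop) (A B : X -> Prop) : X -> Prop :=
  perp_set perp (perp_set perp (fun x => A x \/ B x)).
Definition LX_bot {X : Type} (perp : X -> X -> Prop) : X -> Prop :=
  perp_set perp (perp_set perp (fun _ => False)).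
Definition LX_top {X : Type} : X -> Prop := fun _ => True.
Definition LX_exists {X : Type} (perp R : X -> X -> Prop) (A : X -> Prop) : X -> Prop :=
  perp_set perp (perp_set perp (image_rel R A)).

Definition mol_hom (L : ortholattice) (ex : L -> L)
    {X : Type} (perp R : X -> X -> Prop) (f : L -> (X -> Prop)) : Prop :=
  (forall a, perp_closed perp (f a)) /\
  (forall a b, set_eq (f (ol_meet a b)) (LX_meet (f a) (f b))) /\
  (forall a b, set_eq (f (ol_join a b)) (LX_join perp (f a) (f b))) /\
  (forall a, set_eq (f (ol_compl a)) (perp_set perp (f a))) /\
  set_eq (f ol_bot) (LX_bot perp) /\
  set_eq (f ol_top) LX_top /\
  (forall a, set_eq (f (ex a)) (LX_exists perp R (f a))).

Definition mol_embedding (L : ortholattice) (ex : L -> L)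
    {X : Type} (perp R : X -> X -> Prop) (f : L -> (X -> Prop)) : Prop :=
  mol_hom L ex perp R f /\
  (forall a b, set_eq (f a) (f b) -> a = b).

Definition mol_isomorphism (L : ortholattice) (ex : L -> L)
    {X : Type} (perp R : X -> X -> Prop) (f : L -> (X -> Prop)) : Prop :=
  mol_embedding L ex perp R f /\
  (forall A : X -> Prop, perp_closed perp A -> exists a, set_eq (f a) A).

(* Main.v *)
Require Import Defs.
From Stdlib Require Import Classical.

Definition XL (L : ortholattice) := {x : L | x <> ol_bot}.
Definition pL (L : ortholattice) (x y : XL L) : Prop :=
  ol_le (proj1_sig x) (ol_compl (proj1_sig y)).
Definition dn (L : ortholattice) (a : L) : XL L -> Prop :=
  fun x => ol_le (proj1_sig x) a.

Lemma le_antiC (L : ortholattice) (a b : L) : ol_le a (ol_compl b) -> ol_le b (ol_compl a).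
Proof.
  intro H. apply ol_compl_anti in H. rewrite ol_compl_invol in H. exact H.
Qed.

Lemma meet_top (L : ortholattice) (b : L) : ol_meet ol_top b = b.
Proof.
  apply ol_le_antisym. apply ol_meet_r. apply ol_meet_glb. apply ol_le_top. apply ol_le_refl.
Qed.

Lemma join_bot (L : ortholattice) (b : L) : ol_join ol_bot b = b.
Proof.
  apply ol_le_antisym. apply ol_join_lub. apply ol_bot_le. apply ol_le_refl. apply ol_join_r.
Qed.

Lemma compl_top (L : ortholattice) : ol_compl (@ol_top L) = ol_bot.
Proof. rewrite <- (ol_meet_compl L ol_top). symmetry. apply meet_top. Qed.

Lemma compl_bot (L : ortholattice) : ol_compl (@ol_bot L) = ol_top.
Proof. rewrite <- (ol_join_compl L ol_bot). symmetry. apply join_bot. Qed.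

Lemma le_bot (L : ortholattice) (a : L) : ol_le a ol_bot -> a = ol_bot.
Proof. intro H. apply ol_le_antisym; auto. apply ol_bot_le. Qed.

Lemma perp_dn (L : ortholattice) (a : L) :
  set_eq (perp_set (pL L) (dn L a)) (dn L (ol_compl a)).
Proof.
  intros y; unfold perp_set, dn, pL; split.
  - intro H. destruct (classic (a = ol_bot)) as [E|E].
    + subst. rewrite compl_bot. apply ol_le_top.
    + apply le_antiC. apply (H (exist _ a E)). apply ol_le_refl.
  - intros H z Hz. apply (ol_le_trans _ _ _ _ Hz). apply le_antiC. exact H.
Qed.

Lemma perp_ext (L : ortholattice) (A B : XL L -> Prop) :
  set_eq A B -> set_eq (perp_set (pL L) A) (perp_set (pL L) B).
Proof.
  intros H y; unfold perp_set; split; intros H1 z Hz; apply H1, H, Hz.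
Qed.

Lemma set_eq_trans {X : Type} (A B C : X -> Prop) : set_eq A B -> set_eq B C -> set_eq A C.
Proof. intros H1 H2 x. rewrite (H1 x). apply H2. Qed.

Lemma set_eq_sym {X : Type} (A B : X -> Prop) : set_eq A B -> set_eq B A.
Proof. intros H1 x. rewrite (H1 x). tauto. Qed.

Lemma pp_dn (L : ortholattice) (a : L) :
  set_eq (perp_set (pL L) (perp_set (pL L) (dn L a))) (dn L a).
Proof.
  eapply set_eq_trans. apply perp_ext, perp_dn.
  eapply set_eq_trans. apply perp_dn. rewrite ol_compl_invol. intro; tauto.
Qed.

Lemma demorgan (L : ortholattice) (a b : L) :
  ol_compl (ol_meet (ol_compl a) (ol_compl b)) = ol_join a b.
Proof.
  apply ol_le_antisym.
  - rewrite <- (ol_compl_invol L (ol_join a b)). apply ol_compl_anti.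
    apply ol_meet_glb; apply ol_compl_anti; [apply ol_join_l | apply ol_join_r].
  - apply ol_join_lub.
    + rewrite <- (ol_compl_invol L a) at 1. apply ol_compl_anti. apply ol_meet_l.
    + rewrite <- (ol_compl_invol L b) at 1. apply ol_compl_anti. apply ol_meet_r.
Qed.

Lemma ex_mono (L : ortholattice) (ex : L -> L) (Hex : is_quantifier L ex) (a b : L) :
  ol_le a b -> ol_le (ex a) (ex b).
Proof.
  destruct Hex as [Q1 [Q2 [Q3 [Q4 Q5]]]]. intro H.
  assert (E : ol_join a b = b).
  { apply ol_le_antisym. apply ol_join_lub; auto. apply ol_le_refl. apply ol_join_r. }
  rewrite <- E, Q3. apply ol_join_l.
Qed.

Lemma frame_ok (L : ortholattice) (ex : L -> L) (Hex : is_quantifier L ex) :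
  monadic_orthoframe (pL L) (fun x y : XL L => ol_le (proj1_sig y) (ex (proj1_sig x))).
Proof.
  pose proof Hex as Hq. destruct Hq as [Q1 [Q2 [Q3 [Q4 Q5]]]].
  split; [split|split; [split|]].
  - intros [x Hx] H. unfold pL in H; simpl in H. apply Hx.
    apply le_bot. rewrite <- (ol_meet_compl L x). apply ol_meet_glb; auto. apply ol_le_refl.
  - intros x y H. apply le_antiC. exact H.
  - intros x. apply Q2.
  - intros x y z H1 H2. eapply ol_le_trans. exact H2.
    apply (ol_le_trans _ _ (ex (ex (proj1_sig x)))). apply ex_mono; auto. rewrite Q4. apply ol_le_refl.
  - intros x y [w [Hw Hwy]].
    assert (Hi : set_eq (image_rel (fun x y : XL L => ol_le (proj1_sig y) (ex (proj1_sig x))) (fun z => z = x))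
                        (dn L (ex (proj1_sig x)))).
    { intro z; split.
      - intros [u [Hu Hz]]. subst. exact Hz.
      - intro Hz. exists x. split; auto. }
    apply (perp_ext L _ _ Hi), perp_dn in Hw.
    apply (perp_ext L _ _ Hi), perp_dn. unfold dn in *.
    eapply ol_le_trans. exact Hwy. rewrite <- Q5. apply ex_mono; auto.
Qed.

Lemma dn_meet (L : ortholattice) (a b : L) : set_eq (dn L (ol_meet a b)) (LX_meet (dn L a) (dn L b)).
Proof.
  intro x; unfold dn, LX_meet; split.
  - intro H; split; eapply ol_le_trans; eauto; [apply ol_meet_l | apply ol_meet_r].
  - intros [H1 H2]; apply ol_meet_glb; auto.
Qed.

Lemma dn_join (L : ortholattice) (a b : L) : set_eq (dn L (ol_join a b)) (LX_join (pL L) (dn L a) (dn L b)).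
Proof.
  unfold LX_join.
  assert (H : set_eq (perp_set (pL L) (fun x => dn L a x \/ dn L b x)) (dn L (ol_meet (ol_compl a) (ol_compl b)))).
  { intro x. split.
    - intro H. apply dn_meet. split; apply perp_dn; intros z Hz; apply H; auto.
    - intro H. apply dn_meet in H. destruct H as [H1 H2].
      apply perp_dn in H1. apply perp_dn in H2. intros z [Hz|Hz]; auto. }
  apply set_eq_sym. eapply set_eq_trans. apply perp_ext, H.
  eapply set_eq_trans. apply perp_dn. rewrite demorgan. intro; tauto.
Qed.

Lemma dn_bot (L : ortholattice) : set_eq (dn L ol_bot) (LX_bot (pL L)).
Proof.
  unfold LX_bot.
  assert (H : set_eq (perp_set (pL L) (fun _ => False)) (dn L ol_top)).
  { intro x; split; intro. apply ol_le_top. intros z []. }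
  apply set_eq_sym. eapply set_eq_trans. apply perp_ext, H.
  eapply set_eq_trans. apply perp_dn. rewrite compl_top. intro; tauto.
Qed.

Lemma dn_inj (L : ortholattice) (a b : L) : set_eq (dn L a) (dn L b) -> a = b.
Proof.
  intro H.
  assert (G : forall a b : L, set_eq (dn L a) (dn L b) -> ol_le a b).
  { intros c d Hcd. destruct (classic (c = ol_bot)) as [E|E].
    - subst. apply ol_bot_le.
    - apply (Hcd (exist _ c E)). apply ol_le_refl. }
  apply ol_le_antisym; apply G; auto. apply set_eq_sym; auto.
Qed.

Lemma dn_ex (L : ortholattice) (ex : L -> L) (Hex : is_quantifier L ex) (a : L) :
  set_eq (dn L (ex a)) (LX_exists (pL L) (fun x y : XL L => ol_le (proj1_sig y) (ex (proj1_sig x))) (dn L a)).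
Proof.
  pose proof Hex as Hq. destruct Hq as [Q1 [Q2 [Q3 [Q4 Q5]]]].
  unfold LX_exists.
  assert (H : set_eq (image_rel (fun x y : XL L => ol_le (proj1_sig y) (ex (proj1_sig x))) (dn L a)) (dn L (ex a))).
  { intro y; split.
    - intros [x [Hx Hy]]. unfold dn in *. eapply ol_le_trans. exact Hy. apply ex_mono; auto.
    - intro Hy. destruct (classic (a = ol_bot)) as [E|E].
      + subst. unfold dn in Hy. rewrite Q1 in Hy. destruct y as [y Hy0]. simpl in Hy.
        exfalso. apply Hy0. apply le_bot; auto.
      + exists (exist _ a E). split; auto. apply ol_le_refl. }
  apply set_eq_sym. eapply set_eq_trans. apply perp_ext, perp_ext, H. apply pp_dn.
Qed.

Lemma dn_surj (L : ortholattice) (Hc : ol_complete L) (A : XL L -> Prop) :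
  perp_closed (pL L) A -> exists a, set_eq (dn L a) A.
Proof.
  intro HA.
  destruct (Hc (fun a => exists x, A x /\ proj1_sig x = a)) as [s [Hs1 Hs2]].
  exists s.
  assert (H : set_eq (perp_set (pL L) A) (dn L (ol_compl s))).
  { intro y; unfold perp_set, dn, pL; split.
    - intro H. apply le_antiC. apply Hs2. intros a [x [Hx E]]. subst. apply H; auto.
    - intros H x Hx. eapply ol_le_trans. apply Hs1. exists x; auto.
      apply le_antiC; auto. }
  apply set_eq_sym. eapply set_eq_trans. exact HA.
  eapply set_eq_trans. apply perp_ext, H.
  eapply set_eq_trans. apply perp_dn. rewrite ol_compl_invol. intro; tauto.
Qed.

Theorem mainTheorem19 (L : ortholattice) (ex : L -> L) (Hex : is_quantifier L ex) :
  (exists (X : Type) (perp R : X -> X -> Prop) (f : L -> (X -> Prop)),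
      monadic_orthoframe perp R /\ mol_embedding L ex perp R f) /\
  (ol_complete L ->
   exists (X : Type) (perp R : X -> X -> Prop) (f : L -> (X -> Prop)),
      monadic_orthoframe perp R /\ mol_isomorphism L ex perp R f).
Proof.
  assert (Emb : mol_embedding L ex (pL L) (fun x y : XL L => ol_le (proj1_sig y) (ex (proj1_sig x))) (dn L)).
  { split; [|apply dn_inj].
    split; [intro a; apply set_eq_sym, pp_dn|].
    split; [apply dn_meet|]. split; [apply dn_join|].
    split; [intro a; apply set_eq_sym, perp_dn|].
    split; [apply dn_bot|]. split; [intro x; unfold dn, LX_top; split; auto; intro; apply ol_le_top|].
    apply dn_ex; auto. }
  split.
  - exists (XL L), (pL L), (fun x y : XL L => ol_le (proj1_sig y) (ex (proj1_sig x))), (dn L).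
    split; auto. apply frame_ok; auto.
  - intro Hc. exists (XL L), (pL L), (fun x y : XL L => ol_le (proj1_sig y) (ex (proj1_sig x))), (dn L).
    split; [apply frame_ok; auto|]. split; auto. apply dn_surj; auto.
Qed.
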